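(* For $a,b\in\mathbb{Z}$, writing $\Sigma_{(c,d)}$ for the set of finite sums $\sum f_{(a',b')}E_{(a',b')}$ over $(a',b')\preceq(c,d)$ with all $f_{(a',b')}\in q^{-\frac12}\mathbb{Z}[q^{-\frac12}]$, we have: (1) $q^{\frac12a}E_{(a,b)}X_0-E_{(a,b-1)}\in\Sigma_{(a+1,b-1)}$; (2) $q^{\frac12b}X_3E_{(a,b)}-E_{(a-1,b)}\in\Sigma_{(a-1,b+4)}$; (3) $q^{\frac12b}E_{(a,b)}X_1-E_{(a+1,b)}\in\Sigma_{(a+1,b+4)}$; (4) if $b>0$, $q^{-\frac12a}X_4E_{(a,b)}-E_{(a,b-1)}\in\Sigma_{(a-1,b-1)}$; (5) if $a>0$ and $b\le0$, $q^{-\frac12(a-b)}X_4E_{(a,b)}-E_{(a-1,b-1)}\in\Sigma_{(a-1,b+3)}$; (6) if $a\le0$ and $b\le0$, $q^{-\frac12(a-b)}X_4E_{(a,b)}-E_{(a-1,b-1)}\in\Sigma_{(a,b)}$.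
   Context: Let $\mathcal{T}$ be the quantum torus over $\mathbb{Z}[q^{\pm\frac12}]$ generated by $X_1^{\pm1},X_2^{\pm1}$ with $X_1X_2=qX_2X_1$, with skew field of fractions $\mathcal{F}$. Define $X_k\in\mathcal{F}$ ($k\in\mathbb{Z}$) by $X_{k-1}X_{k+1}=q^{\frac12}X_k+1$ for $k$ odd and $X_{k-1}X_{k+1}=q^2X_k^4+1$ for $k$ even; $\mathcal{A}_q(1,4)$ is the $\mathbb{Z}[q^{\pm\frac12}]$-subalgebra of $\mathcal{F}$ generated by all $X_k$. For $x\in\mathbb{Z}$, $[x]_+=\max(x,0)$. Standard monomials: $E_{(a,b)}=q^{-\frac12ab}X_3^{[-a]_+}X_1^{[a]_+}X_2^{[b]_+}X_0^{[-b]_+}$ for $(a,b)\in\mathbb{Z}^2$. Partial order on $\mathbb{Z}^2$: $(a',b')\preceq(a,b)$ iff $[-a']_+\le[-a]_+$ and $[-b']_+\le[-b]_+$. *)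

(* Defs.v *)
From HB Require Import structures.
From mathcomp Require Import all_boot all_order all_algebra.
Set Implicit Arguments. Unset Strict Implicit. Unset Printing Implicit Defensive.
Import Order.TTheory GRing.Theory Num.Theory.
Local Open Scope ring_scope.

(* The quantum torus T over Z[q^{±1/2}] is presented by generators
   v = q^{1/2} (central, invertible), X1^{±1}, X2^{±1} with X1 X2 = v^2 X2 X1.
   We work in an arbitrary unit ring A receiving such data. *)

(* [x]_+ = max(x,0), as a natural number (it is only used as an exponent). *)
Definition posp (x : int) : nat := match x with Posz n => n | Negz _ => 0%N end.

Definition preceq (p' p : int * int) : bool :=
  (posp (- p'.1) <= posp (- p.1))%N && (posp (- p'.2) <= posp (- p.2))%N.

Section QT.
Variables (A : unitRingType) (v X1 X2 : A).

(* Cluster variables solved from the exchange relations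
   X_{k-1} X_{k+1} = q^{1/2} X_k + 1 (k odd), = q^2 X_k^4 + 1 (k even). *)
Definition qX0 : A := (v * X1 + 1) * X2^-1.
Definition qX3 : A := X1^-1 * (v ^+ 4 * X2 ^+ 4 + 1).
Definition qX4 : A := X2^-1 * (v * qX3 + 1).

Definition Emon (a b : int) : A :=
  v ^ (- (a * b)) * qX3 ^+ posp (- a) * X1 ^+ posp a * X2 ^+ posp b
    * qX0 ^+ posp (- b).

Definition coefOK (f : A) : Prop :=
  exists (n : nat) (c : nat -> int),
    f = \sum_(i < n) (c i)%:~R * v ^- i.+1.

Definition Sigma (c d : int) (x : A) : Prop :=
  exists s : seq ((int * int) * A),
    (forall t, t \in s -> preceq t.1 (c, d) /\ coefOK t.2) /\
    x = \sum_(t <- s) t.2 * Emon t.1.1 t.1.2.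

End QT.

(* Main.v *)
Require Import Defs.
From HB Require Import structures.
From mathcomp Require Import all_boot all_order all_algebra.
From mathcomp Require Import ring lra zify.
Import Order.TTheory GRing.Theory Num.Theory.
Local Open Scope ring_scope.

Section S.
Variables (A : unitRingType) (v X1 X2 : A).
Hypotheses (hv : v \is a GRing.unit) (h1 : X1 \is a GRing.unit) (h2 : X2 \is a GRing.unit)
  (hv1 : GRing.comm v X1) (hv2 : GRing.comm v X2)
  (h12 : X1 * X2 = v ^+ 2 * (X2 * X1)).

Definition y3 : A := locked (qX3 v X1 X2).
Definition y0 : A := locked (qX0 v X1 X2).
Definition y4 : A := locked (qX4 v X1 X2).
Local Notation x3 := y3.
Local Notation x0 := y0.
Local Notation x4 := y4.
Lemma y3E : qX3 v X1 X2 = y3. Proof. by rewrite /y3 -lock. Qed.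
Lemma y0E : qX0 v X1 X2 = y0. Proof. by rewrite /y0 -lock. Qed.
Lemma y4E : qX4 v X1 X2 = y4. Proof. by rewrite /y4 -lock. Qed.
Local Notation E := (Emon v X1 X2).

Definition vp (z : int) : A := locked (v ^ z).
Lemma vpE z : vp z = v ^ z. Proof. by rewrite /vp -lock. Qed.
Lemma vM (z1 z2 : int) : vp z1 * vp z2 = vp (z1 + z2).
Proof. by rewrite !vpE exprzDr. Qed.
Lemma vA (z1 z2 : int) (x : A) : vp z1 * (vp z2 * x) = vp (z1 + z2) * x.
Proof. by rewrite mulrA vM. Qed.
Lemma v0 : vp 0 = 1. Proof. by rewrite vpE expr0z. Qed.
Lemma vE (z1 z2 : int) : z1 = z2 -> vp z1 = vp z2. Proof. by move->. Qed.
Arguments vE {z1 z2}.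

Lemma cvv : GRing.comm v v. Proof. by []. Qed.
Lemma cvX1i : GRing.comm v X1^-1. Proof. exact: commrV. Qed.
Lemma cvX2i : GRing.comm v X2^-1. Proof. exact: commrV. Qed.
Lemma cvz (z : int) (y : A) : GRing.comm v y -> GRing.comm y (vp z).
Proof.
move=> c; rewrite vpE; case: z => n /=.
  by apply: commrX; apply: commr_sym.
by apply: commrV; apply: commrX; apply: commr_sym.
Qed.
Lemma cvint (c : int) : GRing.comm v c%:~R. Proof. exact: commr_int. Qed.
Lemma cvvz (z : int) : GRing.comm v (vp z). Proof. exact: cvz. Qed.

Ltac cvt := repeat first [ apply: commrM | apply: commrD | apply: commrX | apply: commrN
  | apply: commr1 | apply: commr0 | exact: hv1 | exact: hv2 | exact: cvX1i | exact: cvX2i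
  | exact: cvv | exact: cvint | exact: cvvz ].

Lemma x3E : x3 = X1^-1 * (v ^+ 4 * X2 ^+ 4 + 1). Proof. by rewrite -y3E. Qed.
Lemma x0E : x0 = (v * X1 + 1) * X2^-1. Proof. by rewrite -y0E. Qed.
Lemma x4E : x4 = X2^-1 * (v * x3 + 1). Proof. by rewrite -y4E -y3E. Qed.
Lemma cvx3 : GRing.comm v x3. Proof. rewrite x3E; cvt. Qed.
Lemma cvx0 : GRing.comm v x0. Proof. rewrite x0E; cvt. Qed.
Lemma cvx4 : GRing.comm v x4. Proof. rewrite x4E x3E; cvt. Qed.

Ltac cv := repeat first [ apply: commrM | apply: commrD | apply: commrX | apply: commrN
  | apply: commr1 | apply: commr0 | exact: hv1 | exact: hv2 | exact: cvX1i | exact: cvX2i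
  | exact: cvv | exact: cvint | exact: cvvz | exact: cvx3 | exact: cvx0 | exact: cvx4 ].


Lemma vC (z : int) (y : A) : GRing.comm v y -> y * vp z = vp z * y.
Proof. by move=> c; rewrite (cvz z y c). Qed.
Lemma vCl (z : int) (y w : A) : GRing.comm v y -> y * (vp z * w) = vp z * (y * w).
Proof. by move=> c; rewrite !mulrA vC. Qed.

Lemma qpow1 (x y : A) (c : int) : GRing.comm v x -> GRing.comm v y ->
  y * x = vp c * (x * y) -> forall i : nat, y * x ^+ i = vp (c * i%:Z) * (x ^+ i * y).
Proof.
move=> cx cy e; elim=> [|i IH]; first by rewrite (_ : c * 0%N%:Z = 0) ?v0 ?expr0 ?mul1r ?mulr1 // mulr0.
rewrite exprS mulrA e -mulrA -(mulrA x) IH vCl // mulrA -[in RHS]mulrA.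
rewrite vM; congr (vp _ * _); lia.
Qed.
Arguments qpow1 {x y c}.
Lemma qpow (x y : A) (c : int) : GRing.comm v x -> GRing.comm v y ->
  y * x = vp c * (x * y) -> forall i j : nat, y ^+ j * x ^+ i = vp (c * (i%:Z * j%:Z)) * (x ^+ i * y ^+ j).
Proof.
move=> cx cy e i; elim=> [|j IH]; first by rewrite (_ : c * (i%:Z * 0%N%:Z) = 0) ?v0 ?expr0 ?mul1r ?mulr1 // !mulr0.
rewrite exprS -mulrA IH vCl // mulrA -mulrA (mulrA y) (qpow1 cx cy e) -!mulrA vA; congr (vp _ * _); lia.
Qed.

Lemma qinvr (x y : A) (c : int) : GRing.comm v x -> GRing.comm v y -> x \is a GRing.unit ->
  y * x = vp c * (x * y) -> y * x^-1 = vp (- c) * (x^-1 * y).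
Proof.
move=> cx cy ux e.
have H : x^-1 * y = vp c * (y * x^-1).
  rewrite -{1}(mulrK ux y) e !mulrA vC; last by apply: commrV.
  by rewrite -!mulrA mulKr.
by rewrite H vA addNr v0 mul1r.
Qed.

Lemma qinvl (x y : A) (c : int) : GRing.comm v x -> GRing.comm v y -> y \is a GRing.unit ->
  y * x = vp c * (x * y) -> y^-1 * x = vp (- c) * (x * y^-1).
Proof.
move=> cx cy uy e.
have H : x * y^-1 = vp c * (y^-1 * x).
  rewrite -{1}(mulKr uy x) e -!mulrA vCl; last by apply: commrV.
  by rewrite mulrV // mulr1.
by rewrite H vA addNr v0 mul1r.
Qed.
Arguments qinvr {x y c}.
Arguments qinvl {x y c}.
Arguments qpow {x y c}.

Lemma B1 : X2 * X1 = vp (-2) * (X1 * X2).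
Proof. by rewrite h12 mulrA (_ : v ^+ 2 = vp 2) ?vM ?vpE // (_ : -2 + 2 = 0) ?expr0z ?mul1r. Qed.

Lemma X2X1i : X2 * X1^-1 = vp 2 * (X1^-1 * X2).
Proof. by rewrite (qinvr hv1 hv2 h1 B1) opprK. Qed.
Lemma X2iX1 : X2^-1 * X1 = vp 2 * (X1 * X2^-1).
Proof. by rewrite (qinvl hv1 hv2 h2 B1) opprK. Qed.

Lemma cX2P : GRing.comm X2 (v ^+ 4 * X2 ^+ 4 + 1).
Proof.
apply: commrD; last exact: commr1.
apply: commrM; apply: commrX; [exact: commr_sym | exact: commr_refl].
Qed.
Lemma cX1Q : GRing.comm X1 (v * X1 + 1).
Proof.
apply: commrD; last exact: commr1.
apply: commrM; [exact: commr_sym | exact: commr_refl].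
Qed.

Lemma B2 : X2 * x3 = vp 2 * (x3 * X2).
Proof.
rewrite x3E; move: (v ^+ 4 * X2 ^+ 4 + 1) cX2P => P cP.
by rewrite mulrA X2X1i -!mulrA cP.
Qed.
Lemma B3 : x0 * X1 = vp 2 * (X1 * x0).
Proof.
have cvQ : GRing.comm v (v * X1 + 1) by cvt.
rewrite x0E; move: (v * X1 + 1) cX1Q cvQ => Q cQ cvQ.
rewrite -mulrA X2iX1 vCl //.
by congr (_ * _); rewrite mulrA -cQ -mulrA.
Qed.

Lemma v1 : v = vp 1. Proof. by rewrite vpE expr1z. Qed.
Lemma B4 : X2 * x0 = vp (-1) * X1 + 1.
Proof.
have e1 : X2 * (v * X1) = vp (-1) * (X1 * X2).
  by rewrite mulrA -hv2 -mulrA B1 mulrA {1}v1 vM.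
by rewrite x0E mulrA mulrDr mulr1 e1 mulrDl mulrV // -mulrA mulrK.
Qed.
Lemma B10 : x0 * X2 = v * X1 + 1.
Proof. by rewrite x0E mulrVK. Qed.
Lemma B5 : x3 * X1 = vp (-4) * X2 ^+ 4 + 1.
Proof.
rewrite x3E (_ : v ^+ 4 = vp 4); last by rewrite vpE.
rewrite -mulrA mulrDl mul1r -mulrA.
rewrite -{3}(expr1 X1) (qpow hv1 hv2 B1 1 4) expr1 vA mulrDr.
rewrite vCl; last exact: cvX1i.
by rewrite mulKr // mulVr // (vE (_ : 4 + -2 * (1%Z * 4%Z) = -4)).

Qed.

Lemma x3X2 : x3 * X2 = vp (-2) * (X2 * x3).
Proof. by rewrite B2 vA (vE (_ : -2 + 2 = 0)) // v0 mul1r. Qed.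
Lemma B7 : x4 * x3 = vp (-2) * (x3 * x4).
Proof.
have cP : GRing.comm x3 (v * x3 + 1).
  apply: commrD; last exact: commr1.
  apply: commrM; [exact: commr_sym cvx3 | exact: commr_refl].
rewrite x4E; move: (v * x3 + 1) cP => P cP.
by rewrite -mulrA -cP mulrA (qinvl cvx3 hv2 h2 B2) -!mulrA.
Qed.
Lemma B9 : x4 * X2 = vp (-1) * x3 + 1.
Proof.
rewrite x4E -mulrA mulrDl mul1r -mulrA x3X2 mulrDr mulVr // {1}v1 vA vCl; last exact: cvX2i.
by rewrite mulKr // (vE (_ : 1 + -2 = -1)).
Qed.
Lemma x2e (n : nat) : X2 ^+ n * X2 = X2 ^+ n.+1.
Proof. by rewrite exprSr. Qed.
Lemma addK3 (a b c : A) : a + b + c - a = c + b.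
Proof. by rewrite addrAC (addrAC a) subrr add0r addrC. Qed.
Lemma B8 : x4 = vp (-1) * (x3 * x0) - vp (-4) * X2 ^+ 3.
Proof.
apply: (mulIr h2); rewrite B9 mulrBl -(mulrA (vp (-4))) x2e -!(mulrA (vp (-1))) -(mulrA x3) B10 mulrDr mulr1 mulrA -cvx3 -mulrA B5 v1 mulrDr vA mulrDr (vE (_ : -1 + 1 = 0)) // v0 mul1r.
by rewrite mulr1 addK3.
Qed.
Lemma B6 : x4 * X1 = vp (-3) * X2 ^+ 3 + v * x0.
Proof.
apply: (mulIr h2); rewrite -mulrA h12 (_ : v ^+ 2 = vp 2); last by rewrite vpE.
rewrite vCl; last exact: cvx4.
rewrite (mulrA x4) B9 mulrDl mul1r -mulrA B5 mulrDr mulrDr !vA mulrDl -(mulrA (vp (-3))) x2e -mulrA B10 v1 mulrDr vA mulr1.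
rewrite vM mulrDr vA mulr1 -addrA (addrC (vp 2 * X1)) (vE (_ : 2 + (-1 - 4) = -3)) // (vE (_ : 2 + -1 = 1)) // (vE (_ : 1 + 1 = 2)) //.
Qed.

Lemma P21 (i j : nat) : X2 ^+ j * X1 ^+ i = vp (-2 * (i%:Z * j%:Z)) * (X1 ^+ i * X2 ^+ j).
Proof. exact: (qpow hv1 hv2 B1). Qed.
Lemma P23 (k j : nat) : X2 ^+ j * x3 ^+ k = vp (2 * (k%:Z * j%:Z)) * (x3 ^+ k * X2 ^+ j).
Proof. exact: (qpow cvx3 hv2 B2). Qed.
Lemma P32 (k j : nat) : x3 ^+ k * X2 ^+ j = vp (-2 * (k%:Z * j%:Z)) * (X2 ^+ j * x3 ^+ k).
Proof. by rewrite P23 vA (vE (_ : -2 * (k%:Z * j%:Z) + 2 * (k%:Z * j%:Z) = 0)) ?v0 ?mul1r //; lia. Qed.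
Lemma P01 (i m : nat) : x0 ^+ m * X1 ^+ i = vp (2 * (i%:Z * m%:Z)) * (X1 ^+ i * x0 ^+ m).
Proof. exact: (qpow hv1 cvx0 B3). Qed.
Lemma P43 (k : nat) : x4 * x3 ^+ k = vp (-2 * k%:Z) * (x3 ^+ k * x4).
Proof. exact: (qpow1 cvx3 cvx4 B7). Qed.

Definition Ew (a b : int) : A := locked (Emon v X1 X2 a b).
Lemma EwE a b : Emon v X1 X2 a b = Ew a b. Proof. by rewrite /Ew -lock. Qed.

Lemma pospN (n : nat) : posp (- (n%:Z)) = 0%N. Proof. by case: n. Qed.
Lemma pospNN (n : nat) : posp (- - (n%:Z)) = n. Proof. by rewrite opprK. Qed.

Lemma Edef a b : Ew a b = vp (- (a * b)) *
  (x3 ^+ posp (- a) * (X1 ^+ posp a * (X2 ^+ posp b * x0 ^+ posp (- b)))).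
Proof. by rewrite -EwE /Emon y3E y0E vpE !mulrA. Qed.

Lemma pospZ (n : nat) : posp n%:Z = n. Proof. by []. Qed.
Ltac Eform := move=> -> ->; rewrite Edef ?pospNN ?pospN ?pospZ ?pospN ?expr0 ?mul1r ?mulr1;
  congr (vp _ * _); ring.
Lemma EPP (n j : nat) a b : a = n%:Z -> b = j%:Z -> Ew a b = vp (- (n%:Z * j%:Z)) * (X1 ^+ n * X2 ^+ j).
Proof. Eform. Qed.
Lemma EPN (n m : nat) a b : a = n%:Z -> b = - m%:Z -> Ew a b = vp (n%:Z * m%:Z) * (X1 ^+ n * x0 ^+ m).
Proof. Eform. Qed.
Lemma ENP (k j : nat) a b : a = - k%:Z -> b = j%:Z -> Ew a b = vp (k%:Z * j%:Z) * (x3 ^+ k * X2 ^+ j).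
Proof. Eform. Qed.
Lemma ENN (k m : nat) a b : a = - k%:Z -> b = - m%:Z -> Ew a b = vp (- (k%:Z * m%:Z)) * (x3 ^+ k * x0 ^+ m).
Proof. Eform. Qed.

Definition Qb (b : int) : A := locked (X2 ^+ posp b * x0 ^+ posp (- b)).
Lemma EP (n : nat) a b : a = n%:Z -> Ew a b = vp (- (n%:Z * b)) * (X1 ^+ n * Qb b).
Proof. by move=> ->; rewrite /Qb -lock Edef pospN pospZ expr0 mul1r. Qed.
Lemma EN (k : nat) a b : a = - k%:Z -> Ew a b = vp (k%:Z * b) * (x3 ^+ k * Qb b).
Proof. by move=> ->; rewrite /Qb -lock Edef pospNN pospN expr0 mul1r mulNr opprK. Qed.

Lemma preceq_trans (p q r : int * int) : preceq p q -> preceq q r -> preceq p r.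
Proof.
rewrite /preceq => /andP [h1' h2'] /andP [h3 h4].
by apply/andP; split; [exact: leq_trans h1' h3 | exact: leq_trans h2' h4].
Qed.
Lemma preceq_refl p : preceq p p.
Proof. by rewrite /preceq !leqnn. Qed.

Definition term (t : (int * int) * (int * int)) : A := (t.2.1)%:~R * vp t.2.2 * Ew t.1.1 t.1.2.
Definition W (p : int * int) (n : int) (x : A) : Prop :=
  exists s : seq ((int * int) * (int * int)),
    all (fun t => preceq t.1 p && (t.2.2 <= n)) s /\ x = \sum_(t <- s) term t.

Lemma W0 p n : W p n 0.
Proof. by exists [::]; rewrite big_nil. Qed.
Lemma WD p n x y : W p n x -> W p n y -> W p n (x + y).
Proof.
move=> [s1 [a1 ->]] [s2 [a2 ->]]; exists (s1 ++ s2).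
by rewrite all_cat a1 a2 big_cat.
Qed.
Lemma W_mono p p' n n' x : preceq p p' -> n <= n' -> W p n x -> W p' n' x.
Proof.
move=> hp hn [s [a ->]]; exists s; split=> //.
apply/allP => t /(allP a) /andP [t1 t2]; apply/andP; split.
  exact: preceq_trans hp.
exact: le_trans hn.
Qed.
Lemma W_term p n (a b c e : int) : preceq (a, b) p -> e <= n -> W p n (c%:~R * vp e * Ew a b).
Proof.
move=> hp he; exists [:: ((a, b), (c, e))]; split; first by rewrite /= hp he.
by rewrite big_seq1.
Qed.
Lemma W_t1 p n (a b e : int) : preceq (a, b) p -> e <= n -> W p n (vp e * Ew a b).
Proof. by move=> hp he; rewrite -[vp e]mul1r -[X in X * vp e]mulr1z; apply: W_term. Qed.
Lemma W_cv (c e : int) p n x : W p n x -> W p (n + e) (c%:~R * vp e * x).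
Proof.
move=> [s [a ->]].
exists (map (fun t : (int * int) * (int * int) => (t.1, (c * t.2.1, e + t.2.2))) s); split.
  rewrite all_map; apply/allP => t /(allP a) /andP [t1 t2] /=.
  by rewrite t1 /= addrC lerD2r.
rewrite big_map mulr_sumr; apply: eq_bigr => t _.
rewrite /term /= intrM -!mulrA; congr (_ * _).
by rewrite mulrA commr_int -mulrA vA.
Qed.
Arguments W_cv c e {p n x}.
Lemma WN p n x : W p n x -> W p n (- x).
Proof.
move=> h; have := W_cv (-1) 0 h; rewrite addr0 v0 mulr1.
by rewrite (_ : (-1)%:~R = -1 :> A) ?mulN1r // mulrN1z.
Qed.
Lemma WB p n x y : W p n x -> W p n y -> W p n (x - y).
Proof. by move=> hx hy; apply: WD => //; apply: WN. Qed.
Lemma Wv p n x (e : int) : W p n x -> W p (n + e) (vp e * x).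
Proof. by move=> h; have := W_cv 1 e h; rewrite mulr1z mul1r. Qed.
Arguments Wv {p n x}.

Lemma W_left (y : A) p p' (m : int) : GRing.comm v y ->
  (forall a b, preceq (a, b) p -> W p' m (y * Ew a b)) ->
  forall n x, W p n x -> W p' (m + n) (y * x).
Proof.
move=> cy hE n x [s [a ->]]; elim: s a => [|t s IH] /=; first by move=> _; rewrite big_nil mulr0; apply: W0.
move=> /andP [/andP [t1 t2] a]; rewrite big_cons mulrDr; apply: WD; last exact: IH.
rewrite /term !mulrA (commr_int y) -(mulrA _ y) (vC _ _ cy) mulrA -mulrA.
apply: (@W_mono p' p' (m + t.2.2)); [exact: preceq_refl | by rewrite lerD2l | ].
by apply: W_cv; apply: hE; case: t t1 t2 => [[? ?] ?].
Qed.

Definition X2p (n : nat) : A := locked (X2 ^+ n).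
Lemma X2pE n : X2 ^+ n = X2p n. Proof. by rewrite /X2p -lock. Qed.
Lemma cvX2p n : GRing.comm v (X2p n). Proof. rewrite -X2pE; cv. Qed.

Lemma B5' : x3 * X1 = vp (-4) * X2p 4 + 1. Proof. by rewrite B5 X2pE. Qed.
Lemma B6' : x4 * X1 = vp (-3) * X2p 3 + vp 1 * x0. Proof. by rewrite B6 X2pE -v1. Qed.
Lemma B8' : x4 = vp (-1) * (x3 * x0) - vp (-4) * X2p 3. Proof. by rewrite {1}B8 X2pE. Qed.

Lemma M21 (n : nat) w : X2 * (X1 ^+ n * w) = vp (-2 * n%:Z) * (X1 ^+ n * (X2 * w)).
Proof.
rewrite mulrA -{1}(expr1 X2) P21 -(expr1 X2) -mulrA -mulrA; congr (vp _ * _); ring.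
Qed.
Lemma M23 (k : nat) w : X2 * (x3 ^+ k * w) = vp (2 * k%:Z) * (x3 ^+ k * (X2 * w)).
Proof.
rewrite mulrA -{1}(expr1 X2) P23 -(expr1 X2) -mulrA -mulrA; congr (vp _ * _); ring.
Qed.
Lemma M32 (k j : nat) w : x3 ^+ k * (X2p j * w) = vp (-2 * (k%:Z * j%:Z)) * (X2p j * (x3 ^+ k * w)).
Proof. by rewrite mulrA -X2pE P32 -mulrA -mulrA. Qed.
Lemma M20 w : X2 * (x0 * w) = vp (-1) * (X1 * w) + w.
Proof. by rewrite mulrA B4 mulrDl mul1r mulrA. Qed.
Lemma M31 w : x3 * (X1 * w) = vp (-4) * (X2p 4 * w) + w.
Proof. by rewrite mulrA B5' mulrDl mul1r mulrA. Qed.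
Lemma M22 (j : nat) : X2 * X2 ^+ j = X2 ^+ j.+1. Proof. by rewrite exprS. Qed.
Lemma M2p (i : nat) x : X2 ^+ i * x = X2p i * x. Proof. by rewrite X2pE. Qed.

Ltac vfin := rewrite ?vA; congr (vp _ * _); ring.
Ltac vpush := repeat (rewrite vCl; last by cv).

Lemma eq_i (n j : nat) : X2 * Ew n j = vp (- n%:Z) * Ew n (j%:Z + 1).
Proof.
rewrite (EPP n j n j) // (EPP n j.+1 n (j%:Z + 1)) //; last by lia.
rewrite vCl; last by cv.
by rewrite M21 M22; vfin.
Qed.

Lemma eq_ii (n m : nat) : X2 * Ew n (- (m.+1)%:Z) =
  vp (- n%:Z - m%:Z - 1) * Ew (n%:Z + 1) (- m%:Z) + vp (- n%:Z) * Ew n (- m%:Z).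
Proof.
rewrite (EPN n m.+1 n (- (m.+1)%:Z)) // (EPN n.+1 m (n%:Z + 1) (- m%:Z)) // ?(EPN n m n (- m%:Z)) //; last by lia.
rewrite vCl; last by cv.
rewrite M21 exprS M20 mulrDr.
rewrite (vCl (-1) (X1 ^+ n)); last by cv.
rewrite [X1 ^+ n * (X1 * _)]mulrA -exprSr !mulrDr !vA; congr (_ + _); vfin.
Qed.

Lemma eq_iii (k j : nat) : X2 * Ew (- (k.+1)%:Z) j = vp (k.+1)%:Z * Ew (- (k.+1)%:Z) (j%:Z + 1).
Proof.
rewrite (ENP k.+1 j (- (k.+1)%:Z) j) // (ENP k.+1 j.+1 (- (k.+1)%:Z) (j%:Z + 1)) //; last by lia.
rewrite vCl; last by cv.
by rewrite M23 M22; vfin.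
Qed.

Lemma eq_iv (k m : nat) : X2 * Ew (- (k.+1)%:Z) (- (m.+1)%:Z) =
  vp (-7 * k%:Z - m%:Z - 4) * (X2p 4 * Ew (- k%:Z) (- m%:Z)) + vp (k%:Z - m%:Z) * Ew (- k%:Z) (- m%:Z)
  + vp (k.+1)%:Z * Ew (- (k.+1)%:Z) (- m%:Z).
Proof.
rewrite (ENN k.+1 m.+1 (- (k.+1)%:Z) (- (m.+1)%:Z)) // (ENN k m (- k%:Z) (- m%:Z)) //.
rewrite (ENN k.+1 m (- (k.+1)%:Z) (- m%:Z)) //.
rewrite vCl; last by cv.
rewrite M23 [x0 ^+ _.+1]exprS M20 mulrDr (vCl (-1) (x3 ^+ k.+1)); last by cv.
rewrite [X in X * (X1 * _)]exprSr -mulrA M31 [x3 ^+ k * _]mulrDr (vCl (-4) (x3 ^+ k)); last by cv.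
rewrite M32 (vCl _ (X2p 4)); last exact: cvX2p.
rewrite !mulrDr !vA; congr (_ + _ + _); vfin.
Qed.

Lemma pospE x : (posp x)%:Z = Num.max x 0.
Proof. case: x => n /=; lia. Qed.
Lemma preceqE (p q : int * int) : preceq p q =
  (Num.max (- p.1) 0 <= Num.max (- q.1) 0) && (Num.max (- p.2) 0 <= Num.max (- q.2) 0).
Proof. by rewrite /preceq -!lez_nat !pospE. Qed.
Ltac pq := first [ (rewrite preceqE /=; apply/andP; split; lia) | (rewrite preceqE; apply/andP; split; cbn [fst snd]; lia) ].

Lemma negz (m : nat) : Negz m = - (m.+1)%:Z. Proof. by []. Qed.

Definition LX2 (K : nat) := forall a b, (posp (- a) <= K)%N -> W (a, b + 1) (- a) (X2 * Ew a b).

Lemma LX2_pos (n : nat) b : W (n%:Z, b + 1) (- n%:Z) (X2 * Ew n b).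
Proof.
case: b => [j|m].
  by rewrite eq_i; apply: W_t1; [exact: preceq_refl | lia].
rewrite negz eq_ii; apply: WD; apply: W_t1; try pq; lia.
Qed.

Lemma LX2_T K : LX2 K -> forall p n x, (posp (- p.1) <= K)%N -> W p n x ->
  W (p.1, p.2 + 1) ((posp (- p.1))%:Z + n) (X2 * x).
Proof.
move=> L p n x hK hx.
apply: (W_left X2 p (p.1, p.2 + 1) (posp (- p.1)) hv2 _ n x hx) => a b hab.
have hab' := hab; move: hab'; rewrite /preceq /= => /andP [ha _].
apply: W_mono (L a b (leq_trans ha hK)).
  by rewrite preceqE /= in hab; move/andP: hab => [u1 u2]; pq.
by move: ha; rewrite -lez_nat !pospE; lia.
Qed.

Lemma LX2_Tn K : LX2 K -> forall (i : nat) p n x, (posp (- p.1) <= K)%N -> W p n x ->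
  W (p.1, p.2 + i%:Z) (i%:Z * (posp (- p.1))%:Z + n) (X2 ^+ i * x).
Proof.
move=> L; elim=> [|i IH] p n x hK hx.
  rewrite expr0 mul1r; apply: W_mono hx; [pq | lia].
rewrite exprS -mulrA.
have := LX2_T K L (p.1, p.2 + i%:Z) _ _ hK (IH p n x hK hx).
apply: W_mono; [pq | rewrite /=; nia].
Qed.

Lemma LX2_0 : LX2 0.
Proof.
move=> a b; case: a => [n|k] //= _; exact: LX2_pos.
Qed.

Lemma LX2_S K : LX2 K -> LX2 K.+1.
Proof.
move=> L a b; case: a => [n|k] /= hK; first exact: LX2_pos.
rewrite negz; case: b => [j|m].
  by rewrite eq_iii; apply: W_t1; [exact: preceq_refl | lia].
rewrite negz eq_iv; apply: WD; [apply: WD|]; last first.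
- by apply: W_t1; [pq | lia].
- by apply: W_t1; [pq | lia].
rewrite -M2p.
have hk : (posp (- (- k%:Z, - m%:Z).1) <= K)%N by rewrite /= pospNN.
have h0 : W (- k%:Z, - m%:Z) 0 (Ew (- k%:Z) (- m%:Z)).
  by rewrite -[Ew _ _]mul1r -v0; apply: W_t1; [exact: preceq_refl | ].
have := Wv (-7 * k%:Z - m%:Z - 4) (LX2_Tn K L 4 _ _ _ hk h0).
by apply: W_mono; [pq | rewrite /= pospNN; lia].
Qed.

Lemma LX2_all K : LX2 K.
Proof. elim: K => [|K IH]; [exact: LX2_0 | exact: LX2_S]. Qed.

Lemma TX2 (i : nat) p n x : W p n x ->
  W (p.1, p.2 + i%:Z) (i%:Z * (posp (- p.1))%:Z + n) (X2 ^+ i * x).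
Proof. by apply: (LX2_Tn (posp (- p.1)) (LX2_all _)). Qed.
Arguments TX2 i {p n x}.

Lemma coef_term (c e : int) : e <= -1 -> coefOK v (c%:~R * vp e).
Proof.
case: e => [k|k] he; first by move: he; lia.
exists k.+1, (fun i => if i == k then c else 0).
rewrite big_ord_recr /= eqxx big1 ?add0r ?vpE //.
move=> i _; rewrite (_ : (widen_ord _ i == k :> nat) = false) ?mul0r //.
by apply/negbTE; rewrite neq_ltn /= ltn_ord.
Qed.

Lemma WS c d x : W (c, d) (-1) x -> Sigma v X1 X2 c d x.
Proof.
move=> [s [a ->]].
exists (map (fun t : (int * int) * (int * int) => (t.1, (t.2.1)%:~R * vp t.2.2)) s); split.
  move=> t /mapP [t0 /(allP a) /andP [t1 t2] ->] /=; split=> //.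
  exact: coef_term.
rewrite big_map; apply: eq_bigr => t _.
by rewrite /term EwE.
Qed.

Lemma e1np a (m : nat) : vp a * Ew a (- m%:Z) * x0 = Ew a (- m%:Z - 1).
Proof.
case: a => [n|k].
  rewrite (EPN n m n (- m%:Z)) // (EPN n m.+1 n (- m%:Z - 1)) //; last by lia.
  by rewrite -!mulrA -exprSr vA; congr (vp _ * _); ring.
rewrite negz (ENN k.+1 m (- (k.+1)%:Z) (- m%:Z)) // (ENN k.+1 m.+1 (- (k.+1)%:Z) (- m%:Z - 1)) //; last by lia.
by rewrite -!mulrA -exprSr vA; congr (vp _ * _); ring.
Qed.

Lemma R20 (j : nat) : X2 ^+ j.+1 * x0 = vp (-1 - 2 * j%:Z) * (X1 * X2 ^+ j) + X2 ^+ j.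
Proof.
rewrite exprSr -mulrA B4 mulrDr mulr1 vCl; last by cv.
rewrite -[X in X2 ^+ j * X]expr1 P21 expr1 vA; congr (vp _ * _ + _); ring.
Qed.

Lemma e1pos (n j : nat) : vp n%:Z * Ew n (j%:Z + 1) * x0 =
  vp (-1 - j%:Z) * Ew (n%:Z + 1) j + Ew n j.
Proof.
rewrite (EPP n j.+1 n (j%:Z + 1)) ?(EPP n.+1 j (n%:Z + 1) j) ?(EPP n j n j) //; try lia.
rewrite -!mulrA R20 mulrDr (vCl _ (X1 ^+ n)); last by cv.
rewrite [X1 ^+ n * (X1 * _)]mulrA -exprSr !mulrDr !vA; congr (_ + _); vfin.
Qed.

Lemma X2pD (i j : nat) : X2p i * X2 ^+ j = X2 ^+ (i + j). Proof. by rewrite -X2pE exprD. Qed.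

Lemma e1neg (k j : nat) : vp (- (k.+1)%:Z) * Ew (- (k.+1)%:Z) (j%:Z + 1) * x0 =
  vp (- j%:Z - 4 * k%:Z - 5) * Ew (- k%:Z) (j%:Z + 4) + vp (- j%:Z - 1) * Ew (- k%:Z) j
  + Ew (- (k.+1)%:Z) j.
Proof.
rewrite (ENP k.+1 j.+1 (- (k.+1)%:Z) (j%:Z + 1)) ?(ENP k (4 + j) (- k%:Z) (j%:Z + 4))
  ?(ENP k j (- k%:Z) j) ?(ENP k.+1 j (- (k.+1)%:Z) j) //; try lia.
rewrite -!mulrA R20 mulrDr (vCl _ (x3 ^+ k.+1)); last by cv.
rewrite [X in X * (X1 * _)]exprSr -mulrA M31 [x3 ^+ k * _]mulrDr (vCl (-4) (x3 ^+ k)); last by cv.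
rewrite X2pD !mulrDr !vA; congr (_ + _ + _); vfin.
Qed.

Lemma I1 a b : W (a + 1, b - 1) (-1) (vp a * Ew a b * x0 - Ew a (b - 1)).
Proof.
case: b => [[|j]|m].
- by rewrite (_ : Posz 0 = - (0%N)%:Z) // e1np subrr; apply: W0.
- case: a => [n|k].
    rewrite (_ : Posz j.+1 = j%:Z + 1) ?e1pos; last by lia.
    rewrite (_ : j%:Z + 1 - 1 = j) ?addrK; last by lia.
    by apply: W_t1; [pq | lia].
  rewrite negz (_ : Posz j.+1 = j%:Z + 1) ?e1neg; last by lia.
  rewrite (_ : j%:Z + 1 - 1 = j) ?addrK; last by lia.
  by apply: WD; apply: W_t1; try pq; lia.
- by rewrite negz e1np subrr; apply: W0.
Qed.

Lemma cvQb b : GRing.comm v (Qb b). Proof. rewrite /Qb -lock; cv. Qed.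

Lemma e2np (k : nat) b : vp b * x3 * Ew (- k%:Z) b = Ew (- k%:Z - 1) b.
Proof.
rewrite (EN k (- k%:Z) b) // (EN k.+1 (- k%:Z - 1) b) //; last by lia.
rewrite -mulrA (vCl _ x3); last by cv.
rewrite exprS vA -mulrA; congr (vp _ * _); ring.
Qed.

Lemma h0W a b : W (a, b) 0 (Ew a b).
Proof. by rewrite -[Ew _ _]mul1r -v0; apply: W_t1; [exact: preceq_refl | ]. Qed.

Lemma e2pos (n : nat) b : vp b * x3 * Ew (n%:Z + 1) b = vp (-4) * (X2p 4 * Ew n b) + Ew n b.
Proof.
rewrite (EP n.+1 (n%:Z + 1) b) ?(EP n n b) //; last by lia.
rewrite -mulrA (vCl _ x3); last by cv.
rewrite exprS -mulrA M31 (vCl _ (X2p 4)); last exact: cvX2p.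
by rewrite !mulrDr !vA; congr (_ + _); vfin.
Qed.

Lemma I2 a b : W (a - 1, b + 4) (-1) (vp b * x3 * Ew a b - Ew (a - 1) b).
Proof.
case: a => [[|n]|k].
- by rewrite (_ : Posz 0 = - (0%N)%:Z) // e2np subrr; apply: W0.
- rewrite (_ : Posz n.+1 = n%:Z + 1) ?e2pos; last by lia.
  rewrite (_ : n%:Z + 1 - 1 = n) ?addrK; last by lia.
  have := Wv (-4) (TX2 4 (h0W n b)); rewrite -M2p.
  by apply: W_mono; [pq | rewrite /= pospN; lia].
- by rewrite negz e2np subrr; apply: W0.
Qed.

Lemma QX1 b : Qb b * X1 = vp (-2 * b) * (X1 * Qb b).
Proof.
rewrite /Qb -lock; case: b => [j|m].
  rewrite pospZ pospN !expr0 !mulr1 -[X in X2 ^+ j * X]expr1 P21 expr1; congr (vp _ * _); ring.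
rewrite negz pospNN pospN expr0 !mul1r -[X in _ * X = _]expr1 P01 expr1; congr (vp _ * _); ring.
Qed.

Lemma e3pos (n : nat) b : vp b * Ew n b * X1 = Ew (n%:Z + 1) b.
Proof.
rewrite (EP n n b) ?(EP n.+1 (n%:Z + 1) b) //; last by lia.
rewrite -!mulrA QX1 (vCl _ (X1 ^+ n)); last by cv.
by rewrite [X1 ^+ n * (X1 * _)]mulrA -exprSr !vA; congr (vp _ * _); ring.
Qed.

Lemma e3neg (k : nat) b : vp b * Ew (- (k.+1)%:Z) b * X1 =
  vp (-4 - 8 * k%:Z) * (X2p 4 * Ew (- k%:Z) b) + Ew (- k%:Z) b.
Proof.
rewrite (EN k.+1 (- (k.+1)%:Z) b) ?(EN k (- k%:Z) b) //.
rewrite -!mulrA QX1 (vCl _ (x3 ^+ k.+1)); last by cv.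
rewrite exprSr -mulrA M31 mulrDr (vCl _ (x3 ^+ k)); last by cv.
rewrite (M32 k 4) (vCl _ (X2p 4)); last exact: cvX2p.
by rewrite !mulrDr !vA; congr (_ + _); vfin.
Qed.

Lemma I3 a b : W (a + 1, b + 4) (-1) (vp b * Ew a b * X1 - Ew (a + 1) b).
Proof.
case: a => [n|k].
  by rewrite e3pos subrr; apply: W0.
rewrite negz e3neg (_ : - (k.+1)%:Z + 1 = - k%:Z) ?addrK; last by lia.
have := Wv (-4 - 8 * k%:Z) (TX2 4 (h0W (- k%:Z) b)); rewrite -M2p.
by apply: W_mono; [pq | rewrite /= pospNN; lia].
Qed.

Lemma Mp21 (i n : nat) w : X2p i * (X1 ^+ n * w) = vp (-2 * (n%:Z * i%:Z)) * (X1 ^+ n * (X2p i * w)).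
Proof. by rewrite -!X2pE mulrA P21 -!mulrA. Qed.
Lemma M01 (n : nat) w : x0 * (X1 ^+ n * w) = vp (2 * n%:Z) * (X1 ^+ n * (x0 * w)).
Proof.
rewrite mulrA -{1}(expr1 x0) P01 expr1 -!mulrA; congr (vp _ * _); ring.
Qed.
Lemma M02 (j : nat) : x0 * X2 ^+ j.+1 = vp 1 * (X1 * X2 ^+ j) + X2 ^+ j.
Proof. by rewrite exprS mulrA B10 mulrDl mul1r -mulrA v1. Qed.
Lemma M42 (j : nat) : x4 * X2 ^+ j.+1 = vp (-1) * (x3 * X2 ^+ j) + X2 ^+ j.
Proof. by rewrite exprS mulrA B9 mulrDl mul1r -mulrA. Qed.
Lemma M43 (k : nat) w : x4 * (x3 ^+ k * w) = vp (-2 * k%:Z) * (x3 ^+ k * (x4 * w)).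
Proof. by rewrite mulrA P43 -!mulrA. Qed.

Lemma e4pos (n j : nat) : vp (- (n%:Z + 1)) * x4 * Ew (n%:Z + 1) (j%:Z + 1) =
  vp (-4 * n%:Z - j%:Z - 5) * Ew n (j%:Z + 4) + (Ew (n%:Z + 1) j + vp (- j%:Z - 1) * Ew n j).
Proof.
rewrite (EPP n.+1 j.+1 (n%:Z + 1) (j%:Z + 1)) ?(EPP n (3 + j.+1) n (j%:Z + 4))
  ?(EPP n.+1 j (n%:Z + 1) j) ?(EPP n j n j) //; try lia.
rewrite -mulrA (vCl _ x4); last by cv.
rewrite [X in x4 * (X * _)]exprS -[X1 * X1 ^+ n * _]mulrA [x4 * (X1 * _)]mulrA B6' mulrDl -!mulrA Mp21 X2pD M01 M02.
rewrite [X1 ^+ n * (_ + _)]mulrDr (vCl 1 (X1 ^+ n)); last by cv.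
rewrite [X1 ^+ n * (X1 * _)]mulrA -exprSr.
by rewrite !mulrDr !vA; congr (_ + (_ + _)); vfin.
Qed.

Lemma e4np (k j : nat) : vp k%:Z * x4 * Ew (- k%:Z) (j%:Z + 1) =
  vp (- j%:Z - 1) * Ew (- k%:Z - 1) j + Ew (- k%:Z) j.
Proof.
rewrite (ENP k j.+1 (- k%:Z) (j%:Z + 1)) ?(ENP k.+1 j (- k%:Z - 1) j) ?(ENP k j (- k%:Z) j) //; try lia.
rewrite -mulrA (vCl _ x4); last by cv.
rewrite M43 M42 [x3 ^+ k * (_ + _)]mulrDr (vCl (-1) (x3 ^+ k)); last by cv.
rewrite [x3 ^+ k * (x3 * _)]mulrA -exprSr.
by rewrite !mulrDr !vA; congr (_ + _); vfin.
Qed.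

Lemma I4 a b : 0 < b -> W (a - 1, b - 1) (-1) (vp (- a) * x4 * Ew a b - Ew a (b - 1)).
Proof.
case: b => [[|j]|m] //= _; rewrite (_ : Posz j.+1 = j%:Z + 1); last by lia.
rewrite (_ : j%:Z + 1 - 1 = j); last by lia.
case: a => [[|n]|k].
- rewrite (_ : Posz 0 = - (0%N)%:Z) // opprK e4np addrK.
  by apply: W_t1; [pq | lia].
- rewrite (_ : Posz n.+1 = n%:Z + 1); last by lia.
  rewrite e4pos (addrC (Ew _ _)) addrA (addrK (Ew (n%:Z + 1) j)).
  by apply: WD; apply: W_t1; try pq; lia.
- rewrite negz opprK e4np addrK.
  by apply: W_t1; [pq | lia].
Qed.

Lemma e5 (n m : nat) : vp (- ((n%:Z + 1) - - m%:Z)) * x4 * Ew (n%:Z + 1) (- m%:Z) =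
  vp (- n%:Z - 4) * (X2p 3 * Ew n (- m%:Z)) + Ew n (- m%:Z - 1).
Proof.
rewrite (EPN n.+1 m (n%:Z + 1) (- m%:Z)) ?(EPN n m n (- m%:Z)) ?(EPN n m.+1 n (- m%:Z - 1)) //; try lia.
rewrite -mulrA (vCl _ x4); last by cv.
rewrite [X in x4 * (X * _)]exprS -[X1 * X1 ^+ n * _]mulrA [x4 * (X1 * _)]mulrA B6' mulrDl -!mulrA M01.
rewrite -exprS (vCl _ (X2p 3)); last exact: cvX2p.
by rewrite !mulrDr !vA; congr (_ + _); vfin.
Qed.

Lemma I5 a b : 0 < a -> b <= 0 ->
  W (a - 1, b + 3) (-1) (vp (- (a - b)) * x4 * Ew a b - Ew (a - 1) (b - 1)).
Proof.
case: a => [[|n]|k] //= _ hb.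
have [m ->] : exists m : nat, b = - m%:Z.
  by case: b hb => [[|j]|m] //= _; [exists 0%N | exists m.+1].
rewrite (_ : Posz n.+1 = n%:Z + 1); last by lia.
rewrite e5 (_ : n%:Z + 1 - 1 = n) ?addrK; last by lia.
have := Wv (- n%:Z - 4) (TX2 3 (h0W n (- m%:Z))); rewrite -M2p.
by apply: W_mono; [pq | rewrite /= pospN; lia].
Qed.

Lemma e6 (k m : nat) : vp (- (- k%:Z - - m%:Z)) * x4 * Ew (- k%:Z) (- m%:Z) =
  Ew (- k%:Z - 1) (- m%:Z - 1) - vp (-7 * k%:Z - m%:Z - 4) * (X2p 3 * Ew (- k%:Z) (- m%:Z)).
Proof.
rewrite (ENN k m (- k%:Z) (- m%:Z)) ?(ENN k.+1 m.+1 (- k%:Z - 1) (- m%:Z - 1)) //; try lia.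
rewrite -mulrA (vCl _ x4); last by cv.
rewrite M43 B8' mulrBl -!mulrA -exprS mulrBr (vCl (-1) (x3 ^+ k)); last by cv.
rewrite (vCl (-4) (x3 ^+ k)); last by cv.
rewrite [x3 ^+ k * (x3 * _)]mulrA -exprSr M32 (vCl _ (X2p 3)); last exact: cvX2p.
by rewrite !mulrBr !vA; congr (_ - _); vfin.
Qed.

Lemma I6 a b : a <= 0 -> b <= 0 ->
  W (a, b) (-1) (vp (- (a - b)) * x4 * Ew a b - Ew (a - 1) (b - 1)).
Proof.
move=> ha hb.
have [k ->] : exists k : nat, a = - k%:Z.
  by case: a ha => [[|j]|m] //= _; [exists 0%N | exists m.+1].
have [m ->] : exists m : nat, b = - m%:Z.
  by case: b hb => [[|j]|m] //= _; [exists 0%N | exists m.+1].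
rewrite e6 addrAC subrr add0r; apply: WN.
have := Wv (-7 * k%:Z - m%:Z - 4) (TX2 3 (h0W (- k%:Z) (- m%:Z))); rewrite -M2p.
by apply: W_mono; [pq | rewrite /= pospNN; lia].
Qed.

Lemma main_sec (a b : int) :
  Sigma v X1 X2 (a + 1) (b - 1)
    (v ^ a * Emon v X1 X2 a b * qX0 v X1 X2 - Emon v X1 X2 a (b - 1)) /\
  Sigma v X1 X2 (a - 1) (b + 4)
    (v ^ b * qX3 v X1 X2 * Emon v X1 X2 a b - Emon v X1 X2 (a - 1) b) /\
  Sigma v X1 X2 (a + 1) (b + 4)
    (v ^ b * Emon v X1 X2 a b * X1 - Emon v X1 X2 (a + 1) b) /\
  (0 < b ->
    Sigma v X1 X2 (a - 1) (b - 1)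
      (v ^ (- a) * qX4 v X1 X2 * Emon v X1 X2 a b - Emon v X1 X2 a (b - 1))) /\
  (0 < a -> b <= 0 ->
    Sigma v X1 X2 (a - 1) (b + 3)
      (v ^ (- (a - b)) * qX4 v X1 X2 * Emon v X1 X2 a b
         - Emon v X1 X2 (a - 1) (b - 1))) /\
  (a <= 0 -> b <= 0 ->
    Sigma v X1 X2 a b
      (v ^ (- (a - b)) * qX4 v X1 X2 * Emon v X1 X2 a b
         - Emon v X1 X2 (a - 1) (b - 1))).
Proof.
rewrite y0E y3E y4E !EwE -!vpE.
split; first exact/WS/I1.
split; first exact/WS/I2.
split; first exact/WS/I3.
split; first by move=> hb; apply/WS/I4.
split; first by move=> ha hb; apply/WS/I5.
by move=> ha hb; apply/WS/I6.
Qed.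
End S.

Theorem lemma4p3 (A : unitRingType) (v X1 X2 : A)
  (hv : v \is a GRing.unit) (h1 : X1 \is a GRing.unit) (h2 : X2 \is a GRing.unit)
  (hv1 : GRing.comm v X1) (hv2 : GRing.comm v X2)
  (h12 : X1 * X2 = v ^+ 2 * (X2 * X1))
  (a b : int) :
  Sigma v X1 X2 (a + 1) (b - 1)
    (v ^ a * Emon v X1 X2 a b * qX0 v X1 X2 - Emon v X1 X2 a (b - 1)) /\
  Sigma v X1 X2 (a - 1) (b + 4)
    (v ^ b * qX3 v X1 X2 * Emon v X1 X2 a b - Emon v X1 X2 (a - 1) b) /\
  Sigma v X1 X2 (a + 1) (b + 4)
    (v ^ b * Emon v X1 X2 a b * X1 - Emon v X1 X2 (a + 1) b) /\
  (0 < b ->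
    Sigma v X1 X2 (a - 1) (b - 1)
      (v ^ (- a) * qX4 v X1 X2 * Emon v X1 X2 a b - Emon v X1 X2 a (b - 1))) /\
  (0 < a -> b <= 0 ->
    Sigma v X1 X2 (a - 1) (b + 3)
      (v ^ (- (a - b)) * qX4 v X1 X2 * Emon v X1 X2 a b
         - Emon v X1 X2 (a - 1) (b - 1))) /\
  (a <= 0 -> b <= 0 ->
    Sigma v X1 X2 a b
      (v ^ (- (a - b)) * qX4 v X1 X2 * Emon v X1 X2 a b
         - Emon v X1 X2 (a - 1) (b - 1))).
Proof. by apply: main_sec. Qed.
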